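(* Let $\bar x\in\Phi$ be a local second-order weak sharp minimizer of problem (P) with corresponding constants $\kappa>0$ and $\delta>0$. Then for any $\varepsilon\in[0,1/2)$, every $x\in S\cap B_\delta(\bar x)$, every $d\in C(x)\cap N^{P,\varepsilon}_S(x)$, and every $\lambda\in\mathbb{R}^m$ with $\nabla_x L(x,\lambda)=0$, one has (i) $\sigma_{\nabla g(x)(T''_\Phi(x;d))}(\lambda)\le 0$; (ii) $\nabla^2_{xx}L(x,\lambda)(d,d)-\sigma_{\nabla g(x)(T^2_\Phi(x;d))+\nabla^2 g(x)(d,d)}(\lambda)\ge 2\kappa(1-2\varepsilon)^2\|d\|^2$.
   Context: Standing setting: $f:\mathbb{R}^n\to\mathbb{R}$ and $g:\mathbb{R}^n\to\mathbb{R}^m$ are twice continuously differentiable, $K\subset\mathbb{R}^m$ is closed, and (P) is the problem $\min f(x)$ s.t. $g(x)\in K$. $\Phi:=\{x\in\mathbb{R}^n: g(x)\in K\}$ is the feasible set and $S$ is the (nonempty) set of optimal solutions of (P). $L(x,\lambda):=f(x)+\langle g(x),\lambda\rangle$. $B_\delta(x)$ is the ball of radius $\delta$ centered at $x$. A point $\bar x\in\Phi$ is a local second-order weak sharp minimizer of (P) with constants $\kappa,\delta>0$ if $f(x)\ge f(\bar x)+\kappa[\mathrm{dist}(x,S)]^2$ for all $x\in\Phi\cap B_\delta(\bar x)$. For a closed set $A$ and $\bar x\in A$: the tangent cone is $T_A(\bar x):=\{d:\exists t_k\downarrow0,d_k\to d,\ \bar x+t_kd_k\in A\}$; the outer second-order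 tangent set in direction $d\in T_A(\bar x)$ is $T^2_A(\bar x;d):=\{w:\exists t_k\downarrow0,w_k\to w,\ \bar x+t_kd+\tfrac12t_k^2w_k\in A\}$; the asymptotic second-order tangent cone is $T''_A(\bar x;d):=\{w:\exists (t_k,r_k)\downarrow(0,0)\text{ with } t_k/r_k\to0,\ w_k\to w,\ \bar x+t_kd+\tfrac12t_kr_kw_k\in A\}$. The critical cone at a feasible $x$ is $C(x):=\{d:\nabla g(x)d\in T_K(g(x)),\ \nabla f(x)d\le0\}$. The proximal normal cone is $N^P_A(\bar x):=\{v:\exists\tau>0 \text{ such that } \bar x \text{ is a nearest point of } A \text{ to } \bar x+\tau v\}$, and for $\varepsilon\ge0$ the $\varepsilon$-proximal normal cone is $N^{P,\varepsilon}_A(\bar x):=\{v:\mathrm{dist}(v,N^P_A(\bar x))\le\varepsilon\|v\|\}$. $\sigma_A(\lambda):=\sup_{u\in A}\langle\lambda,u\rangle$ (equal to $-\infty$ if $A=\emptyset$). $\nabla g(x)\in\mathbb{R}^{m\times n}$ is the Jacobian, $\nabla^2g(x)(d,d):=(d^T\nabla^2g_1(x)d,\dots,d^T\nabla^2g_m(x)d)$, and for a set $A\subset\mathbb{R}^n$, $\nabla g(x)(A):=\{\nabla g(x)u:u\in A\}$. *)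

(* Defs.v *)
From HB Require Import structures.
From mathcomp Require Import all_boot all_order all_algebra.
From mathcomp Require Import all_classical all_reals all_analysis.
Set Implicit Arguments. Unset Strict Implicit. Unset Printing Implicit Defensive.
Import Order.TTheory GRing.Theory Num.Theory.
Import numFieldNormedType.Exports.
Local Open Scope classical_set_scope.
Local Open Scope ring_scope.

Section Defs.
Variable R : realType.

Definition dotv (n : nat) (u v : 'cV[R]_n) : R := \sum_(i < n) u i 0 * v i 0.
Definition enorm (n : nat) (u : 'cV[R]_n) : R := Num.sqrt (dotv u u).

Definition dist (n : nat) (x : 'cV[R]_n) (A : set 'cV[R]_n) : R :=
  inf [set enorm (x - a) | a in A].

Definition Eball (n : nat) (x : 'cV[R]_n) (delta : R) : set 'cV[R]_n :=
  [set y | enorm (y - x) < delta].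

Definition vcvg (n : nat) (u : nat -> 'cV[R]_n) (l : 'cV[R]_n) : Prop :=
  forall e : R, 0 < e -> exists N : nat, forall k, (N <= k)%N -> enorm (u k - l) < e.

Definition rcvg0 (t : nat -> R) : Prop :=
  forall e : R, 0 < e -> exists N : nat, forall k, (N <= k)%N -> `|t k| < e.

(* t_k "decreases" to 0: positive terms converging to 0 *)
Definition pos_to0 (t : nat -> R) : Prop := (forall k, 0 < t k) /\ rcvg0 t.

Definition quad (n : nat) (H : 'M[R]_n) (d : 'cV[R]_n) : R := (d^T *m H *m d) 0 0.

Definition C2_with (n : nat) (F : 'cV[R]_n -> R) (gF : 'cV[R]_n -> 'cV[R]_n)
    (hF : 'cV[R]_n -> 'M[R]_n) : Prop :=
  [/\ (forall x e, 0 < e -> exists2 r, 0 < r & forall y, enorm (y - x) < r ->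
          `|F y - F x - dotv (gF x) (y - x)| <= e * enorm (y - x)),
      (forall x e, 0 < e -> exists2 r, 0 < r & forall y, enorm (y - x) < r ->
          enorm (gF y - gF x - hF x *m (y - x)) <= e * enorm (y - x)) &
      (forall x e, 0 < e -> exists2 r, 0 < r & forall y, enorm (y - x) < r ->
          forall i j, `|hF y i j - hF x i j| < e)].

Definition tangent_cone (n : nat) (A : set 'cV[R]_n) (x : 'cV[R]_n) : set 'cV[R]_n :=
  [set d | exists (t : nat -> R) (dk : nat -> 'cV[R]_n),
     [/\ pos_to0 t, vcvg dk d & forall k, A (x + t k *: dk k)]].

Definition tangent2 (n : nat) (A : set 'cV[R]_n) (x d : 'cV[R]_n) : set 'cV[R]_n :=
  [set w | exists (t : nat -> R) (wk : nat -> 'cV[R]_n),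
     [/\ pos_to0 t, vcvg wk w &
         forall k, A (x + t k *: d + (2^-1 * t k ^+ 2) *: wk k)]].

Definition tangent2_asym (n : nat) (A : set 'cV[R]_n) (x d : 'cV[R]_n) : set 'cV[R]_n :=
  [set w | exists (t r : nat -> R) (wk : nat -> 'cV[R]_n),
     [/\ pos_to0 t, pos_to0 r, rcvg0 (fun k => t k / r k), vcvg wk w &
         forall k, A (x + t k *: d + (2^-1 * t k * r k) *: wk k)]].

Definition prox_normal (n : nat) (A : set 'cV[R]_n) (x : 'cV[R]_n) : set 'cV[R]_n :=
  [set v | exists2 tau : R, 0 < tau &
     forall a, A a -> enorm (x + tau *: v - x) <= enorm (x + tau *: v - a)].

Definition eps_prox_normal (n : nat) (eps : R) (A : set 'cV[R]_n) (x : 'cV[R]_n)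
    : set 'cV[R]_n :=
  [set v | dist v (prox_normal A x) <= eps * enorm v].

(* support function sigma_A(lambda) = sup_{u in A} <lambda, u>  (= -oo if A empty) *)
Definition support_fun (m : nat) (A : set 'cV[R]_m) (lam : 'cV[R]_m) : \bar R :=
  ereal_sup [set (dotv lam u)%:E | u in A].

End Defs.

(* Main.v *)
Require Import Defs.
From HB Require Import structures.
From mathcomp Require Import all_boot all_order all_algebra.
From mathcomp Require Import all_classical all_reals all_analysis.
From mathcomp Require Import ring lra.
Import Order.TTheory GRing.Theory Num.Theory.
Import numFieldNormedType.Exports.
Local Open Scope classical_set_scope.
Local Open Scope ring_scope.

Set Implicit Arguments. Unset Strict Implicit. Unset Printing Implicit Defensive.

Section Vec.
Variable R : realType.
Variable n : nat.
Implicit Types u v w : 'cV[R]_n.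

Lemma dotvE u v : dotv u v = (u^T *m v) 0 0.
Proof. by rewrite /dotv mxE; apply: eq_bigr => i _; rewrite mxE. Qed.

Lemma dotvC u v : dotv u v = dotv v u.
Proof. by apply: eq_bigr => i _; rewrite mulrC. Qed.

Lemma dotvDr u v w : dotv u (v + w) = dotv u v + dotv u w.
Proof. by rewrite /dotv -big_split; apply: eq_bigr => i _; rewrite mxE mulrDr. Qed.

Lemma dotvDl u v w : dotv (v + w) u = dotv v u + dotv w u.
Proof. by rewrite dotvC dotvDr !(dotvC u). Qed.

Lemma dotvZr a u v : dotv u (a *: v) = a * dotv u v.
Proof. by rewrite /dotv mulr_sumr; apply: eq_bigr => i _; rewrite mxE mulrCA. Qed.

Lemma dotvZl a u v : dotv (a *: u) v = a * dotv u v.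
Proof. by rewrite dotvC dotvZr dotvC. Qed.

Lemma dotvNr u v : dotv u (- v) = - dotv u v.
Proof. by rewrite -scaleN1r dotvZr mulN1r. Qed.

Lemma dotvNl u v : dotv (- u) v = - dotv u v.
Proof. by rewrite dotvC dotvNr dotvC. Qed.

Lemma dotvBr u v w : dotv u (v - w) = dotv u v - dotv u w.
Proof. by rewrite dotvDr dotvNr. Qed.

Lemma dotvBl u v w : dotv (v - w) u = dotv v u - dotv w u.
Proof. by rewrite dotvDl dotvNl. Qed.

Lemma dotv0r u : dotv u 0 = 0.
Proof. by rewrite -(scale0r 0) dotvZr mul0r. Qed.

Lemma dotv_ge0 u : 0 <= dotv u u.
Proof. by apply: sumr_ge0 => i _; rewrite -expr2 sqr_ge0. Qed.

Lemma CS2 u v : dotv u v ^+ 2 <= dotv u u * dotv v v.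
Proof.
have H t : 0 <= dotv u u + 2 * t * dotv u v + t ^+ 2 * dotv v v.
  have := dotv_ge0 (u + t *: v).
  rewrite !dotvDl !dotvDr !dotvZl !dotvZr (dotvC v u).
  by move=> h; nra.
have uu := dotv_ge0 u; have vv := dotv_ge0 v.
have [vv0|vvp] := eqVneq (dotv v v) 0.
  rewrite vv0 mulr0.
  have := H (- (dotv u u + 1) / (2 * dotv u v)).
  rewrite vv0 mulr0 addr0.
  have [->|uvn] := eqVneq (dotv u v) 0; first by rewrite expr0n.
  set a := dotv u v; set c := dotv u u.
  have -> : 2 * (- (c + 1) / (2 * a)) * a = - (c + 1) by field.
  lra.
have vvp' : 0 < dotv v v by rewrite lt_def vvp.
have := H (- dotv u v / dotv v v).
set a := dotv u v; set b := dotv v v; set c := dotv u u => h.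
have e : a ^+ 2 <= c * b.
  have : 0 <= (c + 2 * (- a / b) * a + (- a / b) ^+ 2 * b) * b by apply: mulr_ge0 => //; lra.
  have -> : (c + 2 * (- a / b) * a + (- a / b) ^+ 2 * b) * b = c * b - a ^+ 2.
    by field; rewrite -/b.
  lra.
exact: e.
Qed.


Lemma enorm_ge0 u : 0 <= enorm u.
Proof. exact: sqrtr_ge0. Qed.

Lemma enorm_sq u : enorm u ^+ 2 = dotv u u.
Proof. by rewrite /enorm sqr_sqrtr // dotv_ge0. Qed.

Lemma CS u v : `|dotv u v| <= enorm u * enorm v.
Proof.
rewrite /enorm -sqrtrM ?dotv_ge0 // -sqrtr_sqr.
by apply: ler_wsqrtr; apply: CS2.
Qed.

Lemma CS' u v : dotv u v <= enorm u * enorm v.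
Proof. exact: ler_normlW (CS u v). Qed.

Lemma enormD u v : enorm (u + v) <= enorm u + enorm v.
Proof.
have h0 := enorm_ge0 u; have h1 := enorm_ge0 v; have h2 := enorm_ge0 (u + v).
rewrite -(ler_pXn2r (_ : (0 < 2)%N)) ?nnegrE ?addr_ge0 //.
rewrite enorm_sq !dotvDl !dotvDr (dotvC v u) sqrrD !enorm_sq.
have := CS' u v; nra.
Qed.

Lemma enormZ a u : enorm (a *: u) = `|a| * enorm u.
Proof.
by rewrite /enorm dotvZl dotvZr mulrA -expr2 sqrtrM ?sqr_ge0 // sqrtr_sqr.
Qed.

Lemma enormN u : enorm (- u) = enorm u.
Proof. by rewrite -scaleN1r enormZ normrN1 mul1r. Qed.

Lemma enormB u v : enorm (u - v) = enorm (v - u).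
Proof. by rewrite -enormN opprB. Qed.

Lemma enorm0 : enorm (0 : 'cV[R]_n) = 0.
Proof. by rewrite -(scale0r 0) enormZ normr0 mul0r. Qed.

Lemma enormBD u v : enorm u - enorm v <= enorm (u - v).
Proof. have := enormD (u - v) v; rewrite subrK; lra. Qed.

Lemma coord_le u i : `|u i 0| <= enorm u.
Proof.
rewrite -sqrtr_sqr; apply: ler_wsqrtr; rewrite /dotv (bigD1 i) //= expr2.
by rewrite lerDl; apply: sumr_ge0 => j _; rewrite -expr2 sqr_ge0.
Qed.

Definition mxn (H : 'M[R]_n) : R := \sum_i \sum_j `|H i j|.

Lemma mxn_ge0 H : 0 <= mxn H.
Proof. by apply: sumr_ge0 => i _; apply: sumr_ge0 => j _. Qed.

Definition bil (H : 'M[R]_n) u v : R := (u^T *m H *m v) 0 0.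

Lemma bilE H u v : bil H u v = \sum_i \sum_j u i 0 * H i j * v j 0.
Proof.
rewrite /bil mxE exchange_big /=; apply: eq_bigr => j _.
rewrite mxE big_distrl /=; apply: eq_bigr => i _; by rewrite !mxE.
Qed.

Lemma bil_le H u v : `|bil H u v| <= mxn H * enorm u * enorm v.
Proof.
rewrite bilE /mxn mulr_suml; apply: (le_trans (ler_norm_sum _ _ _)).
rewrite mulr_suml; apply: ler_sum => i _.
rewrite mulr_suml mulr_suml; apply: (le_trans (ler_norm_sum _ _ _)).
apply: ler_sum => j _.
  rewrite !normrM (mulrC `|u i 0|) -!mulrA; apply: ler_wpM2l => //.
  by apply: ler_pM => //; apply: coord_le.
Qed.

Lemma bilDl H u v w : bil H (u + v) w = bil H u w + bil H v w.
Proof. by rewrite /bil linearD /= !mulmxDl mxE. Qed.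
Lemma bilDr H u v w : bil H w (u + v) = bil H w u + bil H w v.
Proof. by rewrite /bil mulmxDr mxE. Qed.
Lemma bilZl H a u w : bil H (a *: u) w = a * bil H u w.
Proof. by rewrite /bil linearZ /= -!scalemxAl mxE. Qed.
Lemma bilZr H a u w : bil H w (a *: u) = a * bil H w u.
Proof. by rewrite /bil -scalemxAr mxE. Qed.

Lemma quad_bil H u : quad H u = bil H u u.
Proof. by []. Qed.

Lemma dotv_mul (A : 'M[R]_n) u v : dotv u (A *m v) = bil A u v.
Proof. by rewrite dotvE /bil mulmxA. Qed.

End Vec.

Lemma dotv_tr (R : realType) (m n : nat) (A : 'M[R]_(m, n)) (l : 'cV[R]_m) w :
  dotv l (A *m w) = dotv (A^T *m l) w.
Proof. by rewrite !dotvE trmx_mul trmxK mulmxA. Qed.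

Lemma is_derive_ed (R : realType) (F : R -> R) s D :
  (forall e, 0 < e -> exists2 r, 0 < r & forall u, `|u| < r ->
      `|F (s + u) - F s - u * D| <= e * `|u|) -> is_derive s 1 F D.
Proof.
move=> Hd.
have L : (fun h : R => h^-1 *: ((F \o shift s) (h *: 1) - F s)) @ 0^' --> D.
  apply/cvgrPdist_le => e e0.
  have [r r0 H] := Hd e e0.
  near=> u.
  have u0 : u != 0 by near: u; exact: nbhs_dnbhs_neq.
  have ur : `|u| < r by near: u; exact: dnbhs0_lt.
  have := H u ur.
  rewrite /= [u *: 1]mulr1 (addrC u s) => hu.
  have -> : D - u^-1 *: (F (s + u) - F s) = - u^-1 * (F (s + u) - F s - u * D).
    by rewrite /GRing.scale /=; field.
  rewrite normrM normrN normfV ler_pdivrMl ?normr_gt0 // mulrC.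
  by rewrite (mulrC D) (mulrC `|u|).

apply: DeriveDef; first exact: (cvgP _ L).
exact: (cvg_lim _ L).
Unshelve. all: by end_near. Qed.

Lemma taylor2 (R : realType) n (f : 'cV[R]_n -> R) gf hf : C2_with f gf hf ->
  forall x e, 0 < e -> exists2 r, 0 < r & forall h, enorm h < r ->
  `|f (x + h) - f x - dotv (gf x) h - 2^-1 * quad (hf x) h| <= e * enorm h ^+ 2.
Proof.
case=> C1 C2 _ x e e0.
have [r r0 Hr] := C2 x e e0.
exists r => // h hr.
set q := quad (hf x) h.
have hn := enorm_ge0 h.
pose phi := fun s : R => f (x + s *: h) - f x - s * dotv (gf x) h - 2^-1 * s ^+ 2 * q.
pose dphi := fun s : R => dotv (gf (x + s *: h)) h - dotv (gf x) h - s * q.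
have Dphi : forall s, is_derive s (1:R) phi (dphi s).
  move=> s; apply: is_derive_ed => e' e'0.
  set p := x + s *: h.
  have hp : 0 < enorm h + 1 by lra.
  have qp : 0 < `|q| + 1 by have := normr_ge0 q; lra.
  have [r1 r10 H1] := C1 p (e' / 2 / (enorm h + 1)) (divr_gt0 (divr_gt0 e'0 (ltr0n _ 2)) hp).
  exists (Num.min (r1 / (enorm h + 1)) (e' / (`|q| + 1))).
    by rewrite lt_min !divr_gt0.
  move=> u; rewrite lt_min => /andP[u1 u2].
  have un := normr_ge0 u.
  have pu : p + u *: h - p = u *: h by rewrite addrAC subrr add0r.
  have E : phi (s + u) - phi s - u * dphi s =
     (f (p + u *: h) - f p - dotv (gf p) (p + u *: h - p)) - 2^-1 * u ^+ 2 * q.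
    rewrite pu.
    rewrite /phi /dphi /p scalerDl (addrA x) dotvZr.
    by field.
  rewrite E.
  have B1 : enorm (p + u *: h - p) < r1.
    rewrite pu enormZ.
    move: u1; rewrite ltr_pdivlMr // => u1.
    apply: le_lt_trans u1; nra.
  have H1' := H1 _ B1.
  rewrite pu enormZ in H1'.
  have Hq : `|u| * `|q| <= e'.
    move: u2; rewrite ltr_pdivlMr // => u2.
    have := normr_ge0 q; nra.
  apply: (le_trans (ler_normB _ _)).
  rewrite pu normrM normrM normrX.
  have h2 : `|2^-1 : R| = 2^-1 by rewrite ger0_norm // invr_ge0.
  rewrite h2.
  have : e' / 2 / (enorm h + 1) * (`|u| * enorm h) <= e' / 2 * `|u|.
    rewrite -mulrA; apply: ler_wpM2l; first by rewrite divr_ge0 // ltW.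
    rewrite ler_pdivrMl //; nra.
  nra.
have phi0 : phi 0 = 0.
  by rewrite /phi scale0r addr0 !mul0r expr0n /= mulr0 mul0r !subr0 subrr.
have phi1 : phi 1 = f (x + h) - f x - dotv (gf x) h - 2^-1 * q.
  by rewrite /phi scale1r mul1r expr1n mulr1.
have cont : {within `[0, 1], continuous phi}.
  apply: derivable_within_continuous => s _; have := Dphi s; by case.

have [c c01 Hc] := MVT_segment ler01 (fun s _ => Dphi s) cont.
move: Hc; rewrite phi0 phi1 subr0 subr0 mulr1 => ->.
have c1 : `|c| <= 1.
  by move: c01; rewrite in_itv /= => /andP[c0 c1]; rewrite ger0_norm.
have xc : x + c *: h - x = c *: h by rewrite addrAC subrr add0r.
have hc : enorm (x + c *: h - x) < r.
  rewrite xc enormZ; have := normr_ge0 c; nra.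
have K := Hr _ hc.
have E : dphi c = dotv (gf (x + c *: h) - gf x - hf x *m (x + c *: h - x)) h.
  rewrite /dphi !dotvBl xc (dotvC (hf x *m _)) dotv_mul bilZr.
  by rewrite -quad_bil.
rewrite E; apply: (le_trans (CS _ _)).
move: K; rewrite xc enormZ => K.
have g0 := enorm_ge0 (gf (x + c *: h) - gf x - hf x *m (c *: h)).
have K2 : enorm (gf (x + c *: h) - gf x - hf x *m (c *: h)) <= e * enorm h.
  apply: (le_trans K); apply: ler_wpM2l; first exact: ltW.
  by rewrite -[X in _ <= X]mul1r; apply: ler_wpM2r.
rewrite expr2 mulrA; exact: ler_wpM2r.
Qed.

Lemma le_rho (R : realType) (a b C : R) : 0 <= C ->
  (forall rho, 0 < rho -> rho <= 1 -> b - rho * C <= a) -> b <= a.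
Proof.
move=> C0 H; apply/ler_addgt0Pr => e e0.
have Cp : 0 < C + 1 by lra.
pose rho := Num.min 1 (e / (C + 1)).
have r0 : 0 < rho by rewrite lt_min ltr01 divr_gt0.
have r1 : rho <= 1 by rewrite ge_min lexx.
have r2 : rho <= e / (C + 1) by rewrite ge_min lexx orbT.
have := H rho r0 r1.
have : rho * C <= e.
  move: r2; rewrite ler_pdivlMr // => r2; nra.
lra.
Qed.

Lemma enorm_h (R : realType) n (d u : 'cV[R]_n) (t s U : R) :
  0 <= t -> 0 <= s -> enorm u <= U ->
  enorm (t *: d + s *: u) <= t * enorm d + s * U.
Proof.
move=> t0 s0 uU; apply: (le_trans (enormD _ _)); rewrite !enormZ !ger0_norm //.
by apply: lerD => //; apply: ler_wpM2l.
Qed.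

Lemma enorm_le_U (R : realType) n (u w : 'cV[R]_n) : enorm (u - w) < 1 ->
  enorm u <= enorm w + 1.
Proof. move=> h; have := enormD (u - w) w; rewrite subrK; lra. Qed.

Lemma dot_le (R : realType) n (g u w : 'cV[R]_n) rho : enorm (u - w) < rho ->
  dotv g u <= dotv g w + enorm g * rho.
Proof.
move=> h; have := CS' g (u - w); rewrite dotvBr.
have := enorm_ge0 g; nra.
Qed.

Lemma quad_le (R : realType) n (H : 'M[R]_n) u : quad H u <= mxn H * enorm u ^+ 2.
Proof. by rewrite quad_bil expr2 mulrA; apply: ler_normlW; apply: bil_le. Qed.

Lemma part1 (R : realType) n (f : 'cV[R]_n -> R) gf hf (Phi : set 'cV[R]_n) x d w :
  C2_with f gf hf -> (forall y, Phi y -> f x <= f y) -> dotv (gf x) d <= 0 ->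
  tangent2_asym Phi x d w -> 0 <= dotv (gf x) w.
Proof.
move=> Hf Hmin gd [t [r [wk [[tp tc] [rp rc] trc wkc HP]]]].
set G := enorm (gf x); set M := mxn (hf x); set U := enorm w + 1.
have G0 : 0 <= G by exact: enorm_ge0.
have M0 : 0 <= M by exact: mxn_ge0.
have U0 : 1 <= U by have := enorm_ge0 w; rewrite /U; lra.
have dn := enorm_ge0 d.
apply: (@le_rho _ _ _ (G + (M + 2) * (enorm d + U) ^+ 2)).
  by apply: addr_ge0 => //; apply: mulr_ge0; [lra|apply: sqr_ge0].
move=> rho r0 r1.
have [r1' r1p Ht] := taylor2 Hf x ltr01.
have dU : 0 < enorm d + U by lra.
have [N1 HN1] := tc _ (divr_gt0 r1p dU).
have [N2 HN2] := rc _ ltr01.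
have [N3 HN3] := trc _ r0.
have [N4 HN4] := wkc _ r0.
pose k := maxn (maxn N1 N2) (maxn N3 N4).
have k1 : (N1 <= k)%N by rewrite /k !leq_max leqnn.
have k2 : (N2 <= k)%N by rewrite /k !leq_max leqnn !orbT.
have k3 : (N3 <= k)%N by rewrite /k !leq_max leqnn !orbT.
have k4 : (N4 <= k)%N by rewrite /k !leq_max leqnn !orbT.
have := HN1 k k1; have := HN2 k k2; have := HN3 k k3; have := HN4 k k4.
have tk := tp k; have rk := rp k.
rewrite (gtr0_norm tk) (gtr0_norm rk) gtr0_norm ?divr_gt0 //.
move: (t k) (r k) (wk k) tk rk (HP k) => T Rr u T0 R0 Py h4 h3 h2 h1.
have uU : enorm u <= U by apply: enorm_le_U; lra.
set s := 2^-1 * T * Rr.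
have s0 : 0 < s by rewrite /s !mulr_gt0 // invr_gt0.
have T2 : T ^+ 2 <= 2 * rho * s.
  move: h3; rewrite ltr_pdivrMr // => h3; rewrite /s; nra.
set h := T *: d + s *: u.
have hn : enorm h <= T * enorm d + s * U by apply: enorm_h => //; lra.
have hn' : T * enorm d + s * U <= T * (enorm d + U).
  have i2 : 0 <= 2^-1 * Rr <= 1 by apply/andP; split; lra.
  move: i2 => /andP[i2 i2']; rewrite /s -(mulrC T) -mulrA.
  have : Rr * U <= U by nra.
  move=> hRU; have e1 : T / 2 * (Rr * U) <= T * U.
    rewrite -mulrA; apply: ler_wpM2l; first lra.
    have := le_trans (ler_wpM2l _ hRU) (ler_wpM2r _ _).
    lra.
  lra.
have hr : enorm h < r1'.
  move: h1; rewrite ltr_pdivlMr // => h1; lra.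
have := Ht _ hr; rewrite mul1r => Tay.
have fy : f x <= f (x + h) by rewrite /h addrA; apply: Hmin.
have gh : dotv (gf x) h <= s * (dotv (gf x) w + G * rho).
  rewrite /h dotvDr !dotvZr.
  have := dot_le (gf x) h4; rewrite -/G => hw.
  have : T * dotv (gf x) d <= 0 by nra.
  nra.
have qh := quad_le (hf x) h; rewrite -/M in qh.
have hn2 : enorm h ^+ 2 <= T ^+ 2 * (enorm d + U) ^+ 2.
  rewrite -exprMn.
  have hb : enorm h <= T * (enorm d + U) by lra.
  have := enorm_ge0 h; nra.
have := ler_normlW Tay.
have hq : 0 <= enorm h ^+ 2 by apply: sqr_ge0.
have dd : 0 <= (enorm d + U) ^+ 2 by apply: sqr_ge0.
move=> Tay'.
have key : 0 <= s * (dotv (gf x) w + G * rho) + (M + 2) * (rho * s * (enorm d + U) ^+ 2).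
  have : (2^-1 * M + 1) * enorm h ^+ 2 <= (M + 2) * (rho * s * (enorm d + U) ^+ 2).
    have : enorm h ^+ 2 <= 2 * rho * s * (enorm d + U) ^+ 2.
      apply: (le_trans hn2); apply: ler_wpM2r => //.
    nra.
  lra.
have : 0 <= s * (dotv (gf x) w + G * rho + (M + 2) * rho * (enorm d + U) ^+ 2).
  by move: key; rewrite mulrDr; set A := _ ^+ 2; nra.
rewrite pmulr_rge0 //; lra.
Qed.

Lemma sq_lb (R : realType) (X T D b : R) : 0 <= X -> 0 < T -> 0 <= D -> 0 <= b ->
  T * (D - b) <= X -> T ^+ 2 * (D ^+ 2 - b * (2 * D + b)) <= X ^+ 2.
Proof.
move=> X0 T0 D0 b0 h.
have [Db|Db] := lerP 0 (D - b).
  have h1 : (T * (D - b)) ^+ 2 <= X ^+ 2.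
    have : 0 <= T * (D - b) by apply: mulr_ge0 => //; lra.
    nra.
  have h2 : T ^+ 2 * (D ^+ 2 - b * (2 * D + b)) <= (T * (D - b)) ^+ 2.
    rewrite exprMn; apply: ler_wpM2l; first exact: sqr_ge0.
    nra.
  exact: le_trans h2 h1.
have : D ^+ 2 - b * (2 * D + b) <= 0 by nra.
move=> h3; apply: (le_trans (y := 0)); last exact: sqr_ge0.
rewrite mulr_ge0_le0 //; exact: sqr_ge0.
Qed.

Lemma enorm_lbD (R : realType) n (A B : 'cV[R]_n) : enorm A - enorm B <= enorm (A + B).
Proof. have := enormD (A + B) (- B); rewrite addrK enormN; lra. Qed.

Lemma prox0 (R : realType) n (S : set 'cV[R]_n) x : prox_normal S x 0.
Proof.
exists 1 => // a _; rewrite scaler0 addr0 subrr enorm0; exact: enorm_ge0.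
Qed.

Lemma prox_small (R : realType) n (S : set 'cV[R]_n) x v tau :
  0 < tau -> (forall a, S a -> enorm (x + tau *: v - x) <= enorm (x + tau *: v - a)) ->
  forall tt, 0 < tt -> tt <= tau -> forall a, S a -> tt * enorm v <= enorm (x + tt *: v - a).
Proof.
move=> tau0 H tt tt0 ttt a Sa.
have := H a Sa.
have -> : x + tau *: v - x = tau *: v by rewrite addrAC subrr add0r.
have -> : x + tau *: v - a = (x + tt *: v - a) + (tau - tt) *: v.
  by apply/matrixP => i j; rewrite !mxE; ring.
move=> h; have h2 := enormD (x + tt *: v - a) ((tau - tt) *: v).
rewrite !enormZ in h h2.
rewrite (@ger0_norm _ (tau - tt)) ?subr_ge0 // in h2.
rewrite (@ger0_norm _ tau) in h; last exact: ltW.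
lra.
Qed.

Lemma dist_ge0 (R : realType) n (y : 'cV[R]_n) (S : set 'cV[R]_n) : S !=set0 -> 0 <= dist y S.
Proof.
move=> [a Sa]; apply: lb_le_inf; first by exists (enorm (y - a)), a.
by move=> _ [b _ <-]; exact: enorm_ge0.
Qed.

Lemma dist_lb (R : realType) n (y : 'cV[R]_n) (S : set 'cV[R]_n) L : S !=set0 ->
  (forall a, S a -> L <= enorm (y - a)) -> L <= dist y S.
Proof.
move=> [a Sa] H; apply: lb_le_inf; first by exists (enorm (y - a)), a.
by move=> _ [b Sb <-]; exact: H.
Qed.

Lemma prox_approx (R : realType) n (S : set 'cV[R]_n) x d eps rho :
  0 < rho -> eps_prox_normal eps S x d ->
  exists2 v, prox_normal S x v & enorm (d - v) < eps * enorm d + rho.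
Proof.
move=> r0 Pn.
have ne : [set enorm (d - a) | a in prox_normal S x] !=set0.
  by exists (enorm (d - 0)), 0 => //; exact: prox0.
have : inf [set enorm (d - a) | a in prox_normal S x] < eps * enorm d + rho.
  have Pn2 : dist d (prox_normal S x) <= eps * enorm d := Pn.
  move: Pn2; rewrite /dist; lra.
by move=> /(inf_lt ne) [_ [v Pv <-] lt]; exists v.
Qed.

Lemma sq_mono (R : realType) (a b : R) : 0 <= a -> a <= b -> a ^+ 2 <= b ^+ 2.
Proof. move=> a0 ab; nra. Qed.

Lemma prod_mono (R : realType) (a b c e : R) : 0 <= a -> a <= c -> 0 <= b -> b <= e -> a * b <= c * e.
Proof. move=> *; nra. Qed.

Lemma L_gh (R : realType) n (g d u w : 'cV[R]_n) T s rho :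
  0 < T -> 0 <= s -> dotv g d <= 0 -> enorm (u - w) < rho ->
  dotv g (T *: d + s *: u) <= s * (dotv g w + enorm g * rho).
Proof.
move=> T0 s0 gd uw; rewrite dotvDr !dotvZr.
have hw := dot_le g uw.
have : T * dotv g d <= 0 by nra.
nra.
Qed.

Lemma L_qh (R : realType) n (H : 'M[R]_n) d u T s U :
  0 <= T -> 0 <= s -> enorm u <= U ->
  quad H (T *: d + s *: u) <= T ^+ 2 * quad H d + 2 * T * s * mxn H * enorm d * U
     + s ^+ 2 * mxn H * U ^+ 2.
Proof.
move=> T0 s0 uU.
rewrite !quad_bil bilDl !bilDr !bilZl !bilZr -!quad_bil.
have b1 := ler_normlW (bil_le H d u).
have b2 := ler_normlW (bil_le H u d).
have q2 := quad_le H u.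
move: b1 b2 q2 (mxn_ge0 H) (enorm_ge0 u) (enorm_ge0 d) uU.
move: (mxn H) (enorm u) (enorm d) (bil H d u) (bil H u d) (quad H u) => M nu nd b1 b2 q2.
move=> h1 h2 h3 M0 nu0 nd0 uU'.
have c1 : M * nd * nu <= M * nd * U by apply: ler_wpM2l; [apply: mulr_ge0|].
have c2 : M * nu * nd <= M * U * nd by apply: ler_wpM2r => //; apply: ler_wpM2l.
have U0 : 0 <= U by lra.
have c3 : M * nu ^+ 2 <= M * U ^+ 2 by apply: ler_wpM2l => //; apply: sq_mono.
have TT : 0 <= T * s by nra.
have ss : 0 <= s * s by nra.
rewrite !expr2 in c3 h3 *; nra.
Qed.

Lemma L_hn2 (R : realType) n (d u : 'cV[R]_n) T U :
  0 < T -> enorm u <= U ->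
  enorm (T *: d + (2^-1 * T ^+ 2) *: u) ^+ 2 <= T ^+ 2 * (enorm d + 2^-1 * T * U) ^+ 2.
Proof.
move=> T0 uU.
have s0 : 0 <= 2^-1 * T ^+ 2 by apply: mulr_ge0; [rewrite invr_ge0|apply: sqr_ge0].
have hn := enorm_h d (ltW T0) s0 uU.
rewrite -exprMn; apply: sq_mono; first exact: enorm_ge0.
apply: (le_trans hn); rewrite le_eqVlt; apply/orP; left; apply/eqP; ring.
Qed.

Lemma L_XL (R : realType) n (x v d u a : 'cV[R]_n) T U eps rho :
  0 < T -> enorm u <= U ->
  T * enorm v <= enorm (x + T *: v - a) ->
  enorm (d - v) < eps * enorm d + rho ->
  T * ((1 - 2 * eps) * enorm d - (2 * rho + 2^-1 * T * U)) <=
  enorm (x + (T *: d + (2^-1 * T ^+ 2) *: u) - a).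
Proof.
move=> T0 uU i3 dv.
set s := 2^-1 * T ^+ 2.
have s0 : 0 <= s by apply: mulr_ge0; [rewrite invr_ge0|apply: sqr_ge0].
have -> : x + (T *: d + s *: u) - a = (x + T *: v - a) + (T *: (d - v) + s *: u).
  by apply/matrixP => i j; rewrite !mxE; ring.
have i4 := enorm_lbD (x + T *: v - a) (T *: (d - v) + s *: u).
have i2 := @enorm_h _ _ (d - v) u T s U (ltW T0) s0 uU.
have i1 := enormBD d (d - v).
have dv2 : d - (d - v) = v by apply/matrixP => i j; rewrite !mxE; ring.
rewrite dv2 in i1.
have n1 := enorm_ge0 v; have n2 := enorm_ge0 (d - v).
have : T * enorm (d - v) <= T * (eps * enorm d + rho) by apply: ler_wpM2l; lra.
have : T * (enorm d - enorm (d - v)) <= T * enorm v by apply: ler_wpM2l => //; lra.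
have sU : s * U = T * (2^-1 * T * U) by rewrite /s; ring.
move: i1 i2 i3 i4 n1 n2 sU.
move: (enorm (x + T *: v - a + (T *: (d - v) + s *: u))) (enorm (x + T *: v - a))
  (enorm (T *: (d - v) + s *: u)) (enorm v) (enorm (d - v)) (enorm d) => E A B nv ndv nd.
move=> *; lra.
Qed.

Lemma fin_arith (R : realType) (kappa rho T U nd D G M gw dHd X fy fx gh qh hh : R) :
  0 < kappa -> 0 < rho -> rho <= 1 -> 0 < T -> T < rho -> 1 <= U -> 0 <= nd -> 0 <= D ->
  0 <= G -> 0 <= M ->
  fx + kappa * X ^+ 2 <= fy ->
  fy - fx - gh - 2^-1 * qh <= rho * hh ->
  gh <= 2^-1 * T ^+ 2 * (gw + G * rho) ->
  qh <= T ^+ 2 * dHd + 2 * T * (2^-1 * T ^+ 2) * M * nd * U + (2^-1 * T ^+ 2) ^+ 2 * M * U ^+ 2 ->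
  hh <= T ^+ 2 * (nd + 2^-1 * T * U) ^+ 2 ->
  T ^+ 2 * (D ^+ 2 - (2 * rho + 2^-1 * T * U) * (2 * D + (2 * rho + 2^-1 * T * U))) <= X ^+ 2 ->
  2 * kappa * D ^+ 2 - rho * (2 * kappa * (2 + U) * (2 * D + 2 + U) + G
                        + M * (nd * U + U ^+ 2) + 2 * (nd + U) ^+ 2) <= gw + dHd.
Proof.
move=> k0 r0 r1 T0 Tr U1 nd0 D0 G0 M0 Hs Tay gh' qh' hn2 XS.
set s := 2^-1 * T ^+ 2.
have s0 : 0 < s by rewrite /s mulr_gt0 ?invr_gt0 // exprn_gt0.
set beta := 2 * rho + 2^-1 * T * U.
rewrite -/s in gh' qh'; rewrite -/beta in XS.
have key : s * (2 * kappa * (D ^+ 2 - beta * (2 * D + beta))) <=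
   s * (gw + dHd + (G * rho + T * M * nd * U
        + 2^-1 * s * M * U ^+ 2 + 2 * rho * (nd + 2^-1 * T * U) ^+ 2)).
  have e1' : s * (2 * kappa * (D ^+ 2 - beta * (2 * D + beta))) =
             kappa * (T ^+ 2 * (D ^+ 2 - beta * (2 * D + beta))).
    by rewrite /s; field.
  have e2' : s * (gw + dHd + (G * rho + T * M * nd * U
        + 2^-1 * s * M * U ^+ 2 + 2 * rho * (nd + 2^-1 * T * U) ^+ 2)) =
        s * (gw + G * rho) + 2^-1 * (T ^+ 2 * dHd
          + 2 * T * s * M * nd * U + s ^+ 2 * M * U ^+ 2)
        + rho * (T ^+ 2 * (nd + 2^-1 * T * U) ^+ 2).
    by rewrite /s; field.
  rewrite e1' e2'.
  have : kappa * (T ^+ 2 * (D ^+ 2 - beta * (2 * D + beta))) <= kappa * X ^+ 2.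
    by apply: ler_wpM2l => //; exact: ltW.
  have : 2^-1 * qh <= 2^-1 * (T ^+ 2 * dHd
          + 2 * T * s * M * nd * U + s ^+ 2 * M * U ^+ 2).
    by apply: ler_wpM2l => //; rewrite invr_ge0.
  have : rho * hh <= rho * (T ^+ 2 * (nd + 2^-1 * T * U) ^+ 2).
    by apply: ler_wpM2l => //; exact: ltW.
  lra.
rewrite ler_pM2l // in key.
have T1 : T <= 1 by lra.
have [hT1 hT2] : 0 <= 2^-1 * T * U /\ 2^-1 * T * U <= rho * U.
  have TU : 0 <= T * U by nra.
  split; first lra.
  apply: ler_wpM2r => //; lra.
have rU : rho * U <= U by rewrite -[X in _ <= X]mul1r; apply: ler_wpM2r => //; lra.
have E1 : T * M * nd * U <= rho * (M * (nd * U)).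
  have : 0 <= M * (nd * U) by apply: mulr_ge0 => //; apply: mulr_ge0 => //; lra.
  have -> : T * M * nd * U = T * (M * (nd * U)) by ring.
  move=> h0; apply: ler_wpM2r => //; lra.
have E2 : 2^-1 * s * M * U ^+ 2 <= rho * (M * U ^+ 2).
  have : 0 <= M * U ^+ 2 by apply: mulr_ge0 => //; apply: sqr_ge0.
  have -> : 2^-1 * s * M * U ^+ 2 = (2^-1 * s) * (M * U ^+ 2) by ring.
  move=> h0; apply: ler_wpM2r => //; rewrite /s; nra.
have E3 : 2 * rho * (nd + 2^-1 * T * U) ^+ 2 <= rho * (2 * (nd + U) ^+ 2).
  have -> : 2 * rho * (nd + 2^-1 * T * U) ^+ 2 = rho * (2 * (nd + 2^-1 * T * U) ^+ 2) by ring.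
  apply: ler_wpM2l; first lra.
  apply: ler_wpM2l; first lra.
  apply: sq_mono; lra.
have E4 : 2 * kappa * (beta * (2 * D + beta)) <= rho * (2 * kappa * (2 + U) * (2 * D + 2 + U)).
  have b0 : 0 <= beta by rewrite /beta; lra.
  have bb : beta <= rho * (2 + U) by rewrite /beta; lra.
  have bb' : 2 * D + beta <= 2 * D + 2 + U by rewrite /beta; lra.
  have h0 := prod_mono b0 bb (addr_ge0 (mulr_ge0 (ler0n _ 2) D0) b0) bb'.
  have k2 : 0 <= 2 * kappa by lra.
  have := ler_wpM2l k2 h0.
  have -> : rho * (2 * kappa * (2 + U) * (2 * D + 2 + U)) = 2 * kappa * (rho * (2 + U) * (2 * D + 2 + U)) by ring.
  by [].
have -> : rho * (2 * kappa * (2 + U) * (2 * D + 2 + U) + G + M * (nd * U + U ^+ 2)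
   + 2 * (nd + U) ^+ 2) = rho * (2 * kappa * (2 + U) * (2 * D + 2 + U)) + G * rho
   + rho * (M * (nd * U)) + rho * (M * U ^+ 2) + rho * (2 * (nd + U) ^+ 2) by ring.
have -> : 2 * kappa * D ^+ 2 = 2 * kappa * (D ^+ 2 - beta * (2 * D + beta)) + 2 * kappa * (beta * (2 * D + beta)) by ring.
lra.
Qed.

Lemma part2 (R : realType) n (f : 'cV[R]_n -> R) gf hf (S Phi : set 'cV[R]_n)
    x xbar delta kappa eps d w :
  C2_with f gf hf -> 0 < kappa -> S !=set0 -> 0 <= eps -> eps < 2^-1 ->
  (forall y, Phi y -> enorm (y - xbar) < delta -> f x + kappa * dist y S ^+ 2 <= f y) ->
  enorm (x - xbar) < delta ->
  dotv (gf x) d <= 0 ->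
  eps_prox_normal eps S x d ->
  tangent2 Phi x d w ->
  2 * kappa * (1 - 2 * eps) ^+ 2 * enorm d ^+ 2 <= dotv (gf x) w + quad (hf x) d.
Proof.
move=> Hf k0 S0 e0 e1 Hsh xb gd Pn [t [wk [[tp tc] wkc HP]]].
have -> : 2 * kappa * (1 - 2 * eps) ^+ 2 * enorm d ^+ 2 =
   2 * kappa * ((1 - 2 * eps) * enorm d) ^+ 2 by ring.
have U0 : 1 <= enorm w + 1 by have := enorm_ge0 w; lra.
have dn := enorm_ge0 d.
have D0 : 0 <= (1 - 2 * eps) * enorm d by apply: mulr_ge0 => //; lra.
apply: (@le_rho _ _ _ (2 * kappa * (2 + (enorm w + 1)) * (2 * ((1 - 2 * eps) * enorm d) + 2 + (enorm w + 1)) + enorm (gf x)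
                        + mxn (hf x) * (enorm d * (enorm w + 1) + (enorm w + 1) ^+ 2) + 2 * (enorm d + (enorm w + 1)) ^+ 2)).
  have : 0 <= 2 * kappa * (2 + (enorm w + 1)) * (2 * ((1 - 2 * eps) * enorm d) + 2 + (enorm w + 1)).
    by apply: mulr_ge0; [apply: mulr_ge0|]; [apply: mulr_ge0|..]; lra.
  have : 0 <= mxn (hf x) * (enorm d * (enorm w + 1) + (enorm w + 1) ^+ 2).
    by apply: mulr_ge0; [exact: mxn_ge0|apply: addr_ge0; [apply: mulr_ge0|apply: sqr_ge0]]; lra.
  have := sqr_ge0 (enorm d + (enorm w + 1)); have := enorm_ge0 (gf x); lra.
move=> rho r0 r1.
have [v Pv dv] := prox_approx r0 Pn.
have [tau tau0 Htau] := Pv.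
have Hsmall := prox_small tau0 Htau.
have [re re0 Ht] := taylor2 Hf x r0.
have del0 : 0 < delta - enorm (x - xbar) by lra.
have dU : 0 < enorm d + (enorm w + 1) by lra.
pose T0 := Num.min (Num.min rho tau) (Num.min (re / (enorm d + (enorm w + 1)))
                                       ((delta - enorm (x - xbar)) / (enorm d + (enorm w + 1)))).
have T00 : 0 < T0 by rewrite !lt_min r0 tau0 !divr_gt0.
have [N1 HN1] := tc _ T00.
have [N2 HN2] := wkc _ r0.
pose k := maxn N1 N2.
have h1 := HN1 k (leq_maxl _ _); have h2 := HN2 k (leq_maxr _ _).
have tk := tp k.
rewrite (gtr0_norm tk) in h1.
move: h1; rewrite !lt_min => /andP[/andP[Tr Ttau] /andP[Tre Tdel]].
move: Tre Tdel; rewrite !ltr_pdivlMr // => Tre Tdel.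
have uU : enorm (wk k) <= enorm w + 1 by apply: enorm_le_U; lra.
have Py := HP k.
have yE : x + t k *: d + (2^-1 * t k ^+ 2) *: wk k = x + (t k *: d + (2^-1 * t k ^+ 2) *: wk k).
  by rewrite addrA.
rewrite yE in Py.
have s0 : 0 <= 2^-1 * t k ^+ 2 by apply: mulr_ge0; [rewrite invr_ge0|apply: sqr_ge0].
have hn := enorm_h d (ltW tk) s0 uU.
have hn' : t k * enorm d + 2^-1 * t k ^+ 2 * (enorm w + 1) <= t k * (enorm d + (enorm w + 1)).
  have : 2^-1 * t k ^+ 2 <= t k by nra.
  move=> h0; have := ler_wpM2r (le_trans ler01 U0) h0; lra.
have yb : enorm (x + (t k *: d + (2^-1 * t k ^+ 2) *: wk k) - xbar) < delta.
  have -> : x + (t k *: d + (2^-1 * t k ^+ 2) *: wk k) - xbar =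
     (x - xbar) + (t k *: d + (2^-1 * t k ^+ 2) *: wk k).
    by apply/matrixP => i j; rewrite !mxE; ring.
  have := enormD (x - xbar) (t k *: d + (2^-1 * t k ^+ 2) *: wk k); lra.
have Hs := Hsh _ Py yb.
have X0 := dist_ge0 (x + (t k *: d + (2^-1 * t k ^+ 2) *: wk k)) S0.
have XL : t k * ((1 - 2 * eps) * enorm d - (2 * rho + 2^-1 * t k * (enorm w + 1))) <=
          dist (x + (t k *: d + (2^-1 * t k ^+ 2) *: wk k)) S.
  apply: dist_lb => // a Sa.
  apply: L_XL; [exact: tk|exact: uU|exact: (Hsmall _ tk (ltW Ttau) a Sa)|exact: dv].
have b0 : 0 <= 2 * rho + 2^-1 * t k * (enorm w + 1).
  have : 0 <= t k * (enorm w + 1) by apply: mulr_ge0; lra.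
  lra.
have XS := sq_lb X0 tk D0 b0 XL.
have hr : enorm (t k *: d + (2^-1 * t k ^+ 2) *: wk k) < re by lra.
have Tay := ler_normlW (Ht _ hr).
have gh := L_gh tk s0 gd h2.
have qh := L_qh (hf x) d (ltW tk) s0 uU.
have hn2 := L_hn2 d tk uU.
apply: (fin_arith k0 r0 r1 tk Tr U0 dn D0 (enorm_ge0 _) (mxn_ge0 _) Hs Tay gh qh hn2 XS).
Qed.

Unset Implicit Arguments. Set Strict Implicit. Set Printing Implicit Defensive.


Theorem theorem3p2 (R : realType) (n m : nat)
    (f : 'cV[R]_n -> R) (gradf : 'cV[R]_n -> 'cV[R]_n) (hessf : 'cV[R]_n -> 'M[R]_n)
    (g : 'cV[R]_n -> 'cV[R]_m) (Jg : 'cV[R]_n -> 'M[R]_(m, n))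
    (hessg : 'I_m -> 'cV[R]_n -> 'M[R]_n)
    (K : set 'cV[R]_m) :
  C2_with f gradf hessf ->
  (forall i : 'I_m, C2_with (fun x => g x i 0) (fun x => (row i (Jg x))^T) (hessg i)) ->
  closed K ->
  let Phi := [set x | K (g x)] in
  let S := [set x | Phi x /\ forall y, Phi y -> f x <= f y] in
  S !=set0 ->
  forall (xbar : 'cV[R]_n) (kappa delta : R), 0 < kappa -> 0 < delta ->
  (* xbar is a local second-order weak sharp minimizer with constants kappa, delta *)
  Phi xbar ->
  (forall x, Phi x -> Eball xbar delta x -> f x >= f xbar + kappa * dist x S ^+ 2) ->
  forall (eps : R), 0 <= eps -> eps < 2^-1 ->
  forall (x : 'cV[R]_n), S x -> Eball xbar delta x ->
  forall (d : 'cV[R]_n),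
    (* d in the critical cone C(x) *)
    tangent_cone K (g x) (Jg x *m d) -> dotv (gradf x) d <= 0 ->
    eps_prox_normal eps S x d ->
  forall (lam : 'cV[R]_m),
    (* grad_x L(x, lam) = 0 *)
    gradf x + (Jg x)^T *m lam = 0 ->
    ((support_fun ([set Jg x *m w | w in tangent2_asym Phi x d])%R lam <= 0)%E /\
     ((quad (hessf x) d + \sum_(i < m) lam i 0 * quad (hessg i x) d)%:E
        - support_fun ([set Jg x *m w + \col_(i < m) quad (hessg i x) d
                      | w in tangent2 Phi x d])%R lam
      >= (2 * kappa * (1 - 2 * eps) ^+ 2 * enorm d ^+ 2)%:E)%E).
Proof.
move=> Hf Hg Kc Phi S S0 xbar kappa delta k0 d0 Pxbar Hsh eps e0 e1 x Sx Bx d Tc gd Pn lam HL.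
have HL' : (Jg x)^T *m lam = - gradf x.
  by apply/eqP; rewrite -addr_eq0 addrC HL.
have dotL (w : 'cV[R]_n) : dotv lam (Jg x *m w) = - dotv (gradf x) w.
  by rewrite dotv_tr HL' dotvNl.
have [Px xmin] := Sx.
split.
  apply: ub_ereal_sup => _ [_ [w Tw <-] <-].
  rewrite lee_fin dotL oppr_le0.
  exact: (part1 Hf xmin gd Tw).
set Q := quad (hessf x) d + \sum_(i < m) lam i 0 * quad (hessg i x) d.
set B := 2 * kappa * (1 - 2 * eps) ^+ 2 * enorm d ^+ 2.
have Hsh' : forall y, Phi y -> enorm (y - xbar) < delta -> f x + kappa * dist y S ^+ 2 <= f y.
  move=> y Py yb; have := Hsh y Py yb; have := xmin xbar Pxbar; lra.
have P2 := fun w (Tw : tangent2 Phi x d w) => part2 Hf k0 S0 e0 e1 Hsh' Bx gd Pn Tw.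
have Hsup : (support_fun ([set Jg x *m w + \col_(i < m) quad (hessg i x) d
                      | w in tangent2 Phi x d])%R lam <= ((Q - B)%R)%:E)%E.
  apply: ub_ereal_sup => _ [_ [w Tw <-] <-].
  rewrite lee_fin dotvDr dotL.
  have -> : dotv lam (\col_(i < m) quad (hessg i x) d) = \sum_(i < m) lam i 0 * quad (hessg i x) d.
    by apply: eq_bigr => i _; rewrite mxE.
  have := P2 w Tw; rewrite /Q /B; lra.
have -> : B%:E = (Q%:E - ((Q - B)%R)%:E)%E by rewrite -EFinB; congr (_%:E); ring.
exact: leeB.
Qed.
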